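(* Let $\epsilon\in(\frac12,1)$, $W\in\mathcal{P}(\mathcal{Y}|\mathcal{X})$ with $V_\epsilon(W)>0$, and $a>0$ with $a>\frac{2}{1-\epsilon}$. Let $(f,\varphi)$ be an $(N,R_N)$ constant composition code with $$R_N=C(W)+\sqrt{\frac{V_\epsilon(W)}{N}}\Phi^{-1}(\epsilon)-\frac1N\ln\Big(1-\epsilon-\frac2a\Big)$$ and common composition $Q$ satisfying $V(Q,W)<\frac1aV_\epsilon(W)[\Phi^{-1}(\epsilon)]^2$. Then $\bar{\mathrm{P}}_{\mathrm{e}}(f,\varphi)>\epsilon$.
   Context: $\mathcal{X},\mathcal{Y}$ finite; memoryless channel. An $(N,R)$ constant composition code: encoder $\{1,\dots,\lceil e^{NR}\rceil\}\to\mathcal{X}^N$ all of whose codewords have the same empirical distribution (common composition), decoder $\mathcal{Y}^N\to\mathcal{M}$; $\bar{\mathrm{P}}_{\mathrm{e}}$ is average error over uniform messages. $C(W)$ capacity; $\Phi$ standard Gaussian CDF; $q_P(y)=\sum_xP(x)W(y|x)$; $V(P,W)=\sum_{x,y}P(x)W(y|x)[\ln\frac{W(y|x)}{q_P(y)}-\sum_bW(b|x)\ln\frac{W(b|x)}{q_P(b)}]^2$; for $\epsilon\ge1/2$, $V_\epsilon(W)=\max_{Q:I(Q;W)=C(W)}V(Q,W)$. *)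

(* Defs.v *)
From HB Require Import structures.
From mathcomp Require Import all_boot all_order all_algebra.
From mathcomp Require Import all_classical all_reals all_analysis.
Set Implicit Arguments. Unset Strict Implicit. Unset Printing Implicit Defensive.
Import Order.TTheory GRing.Theory Num.Theory.
Local Open Scope classical_set_scope.
Local Open Scope ring_scope.

Section Defs.
Context {R : realType} {X Y : finType}.

Definition is_dist (P : X -> R) : Prop :=
  (forall x, 0 <= P x) /\ \sum_x P x = 1.

(* channel W in P(Y|X): W x y = W(y|x) *)
Definition is_channel (W : X -> Y -> R) : Prop :=
  forall x, (forall y, 0 <= W x y) /\ \sum_y W x y = 1.

Definition qout (P : X -> R) (W : X -> Y -> R) (y : Y) : R :=
  \sum_x P x * W x y.

(* mutual information I(P;W) (natural log); zero-probability terms vanish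
   since they are multiplied by P(x)W(y|x) = 0 *)
Definition mutinf (P : X -> R) (W : X -> Y -> R) : R :=
  \sum_x \sum_y P x * W x y * ln (W x y / qout P W y).

Definition cvar (P : X -> R) (W : X -> Y -> R) : R :=
  \sum_x \sum_y P x * W x y *
    (ln (W x y / qout P W y)
     - \sum_b W x b * ln (W x b / qout P W b)) ^+ 2.

Definition capacity (W : X -> Y -> R) : R :=
  sup [set r | exists P, is_dist P /\ r = mutinf P W].

(* V_eps(W) for eps >= 1/2: max of V(Q,W) over capacity-achieving Q *)
Definition Veps (W : X -> Y -> R) : R :=
  sup [set r | exists Q, [/\ is_dist Q, mutinf Q W = capacity W & r = cvar Q W]].

Definition composition (N : nat) (x : {ffun 'I_N -> X}) (a : X) : R :=
  (#|[set i | x i == a]|)%:R / N%:R.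

Definition nmsg (N : nat) (Rt : R) : nat := `|Num.ceil (expR (N%:R * Rt))|%N.

Definition prodW (W : X -> Y -> R) (N : nat) (x : {ffun 'I_N -> X})
    (y : {ffun 'I_N -> Y}) : R :=
  \prod_(i < N) W (x i) (y i).

Definition avg_err (W : X -> Y -> R) (N M : nat)
    (f : 'I_M -> {ffun 'I_N -> X}) (phi : {ffun 'I_N -> Y} -> 'I_M) : R :=
  M%:R^-1 * \sum_(m < M) \sum_(y | phi y != m) prodW W (f m) y.

End Defs.

Definition Phi {R : realType} (x : R) : R :=
  Rintegral lebesgue_measure `]-oo, x]%classic (normal_pdf 0 1).

(* Phi^{-1}(e) for e in (0,1): the (unique) x with Phi x = e, written as
   sup {x | Phi x <= e} *)
Definition Phiinv {R : realType} (e : R) : R :=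
  sup [set x : R | Phi x <= e].

(* Main.v *)
Require Import Defs.
From HB Require Import structures.
From mathcomp Require Import all_boot all_order all_algebra.
From mathcomp Require Import all_classical all_reals all_analysis.
From mathcomp Require Import measurable_realfun.
From mathcomp Require Import ring lra.
Import Order.TTheory GRing.Theory Num.Theory.
Local Open Scope ring_scope.
Lemma count_sum (R : realType) (X : finType) (N : nat) (x : {ffun 'I_N -> X}) (g : X -> R) :
  \sum_(i < N) g (x i) = \sum_a (#|[set i | x i == a]%classic|)%:R * g a.
Proof.
rewrite (partition_big (fun i => x i) xpredT) //=.
apply: eq_bigr => a _.
rewrite (eq_bigr (fun _ => g a)); last by move=> i /eqP ->.
rewrite (eq_bigl (fun i => i \in [set i | x i == a]%classic)); last first.
  by move=> i; apply/idP/idP; rewrite in_setE.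
by rewrite sumr_const mulr_natl.
Qed.

Lemma comp_sum (R : realType) (X : finType) (N : nat) (x : {ffun 'I_N -> X}) (g : X -> R) :
  (0 < N)%N ->
  \sum_(i < N) g (x i) = N%:R * \sum_a composition x a * g a.
Proof.
move=> hN; rewrite count_sum mulr_sumr; apply: eq_bigr => a _.
have hN' : (N%:R : R) != 0 by rewrite pnatr_eq0 -lt0n.
by rewrite /composition mulrA [N%:R * _]mulrC divfK.
Qed.

Lemma comp_dist (R : realType) (X : finType) (N : nat) (x : {ffun 'I_N -> X}) :
  (0 < N)%N -> is_dist (composition (R:=R) x).
Proof.
move=> hN; split.
  by move=> a; rewrite /composition divr_ge0.
have := @count_sum R X N x (fun _ => (1:R)).
rewrite sumr_const card_ord => h.
have hN' : (N%:R : R) != 0 by rewrite pnatr_eq0 -lt0n.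
rewrite /composition -mulr_suml.
under eq_bigr do rewrite -[_%:R]mulr1.
by rewrite -h divff.
Qed.

Lemma prod_sum (R : realType) (Y : finType) (N : nat) (F : 'I_N -> Y -> R) :
  \sum_(y : {ffun 'I_N -> Y}) \prod_i F i (y i) = \prod_i \sum_b F i b.
Proof. by rewrite bigA_distr_bigA. Qed.

Lemma var_lemma (R : realType) (Y : finType) (N : nat) (w Z : 'I_N -> Y -> R) :
  (forall i, \sum_b w i b = 1) -> (forall i, \sum_b w i b * Z i b = 0) ->
  \sum_(y : {ffun 'I_N -> Y}) (\prod_i w i (y i)) * (\sum_i Z i (y i)) ^+ 2
  = \sum_i \sum_b w i b * Z i b ^+ 2.
Proof.
move=> hw hz.
have e1 : forall y : {ffun 'I_N -> Y}, (\prod_i w i (y i)) * (\sum_i Z i (y i)) ^+ 2 =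
   \sum_i \sum_j \prod_k (w k (y k) * ((if k == i then Z i (y k) else 1) *
                                       (if k == j then Z j (y k) else 1))).
  move=> y; rewrite expr2 mulr_suml mulr_sumr; apply: eq_bigr => i _.
  rewrite mulr_sumr mulr_sumr; apply: eq_bigr => j _.
  rewrite big_split /= big_split /= -!big_mkcond /= !big_pred1_eq.
  by rewrite mulrA.
under eq_bigr do rewrite e1.
rewrite exchange_big /=; apply: eq_bigr => i _.
rewrite [LHS]exchange_big /=.
rewrite (bigD1 i) //= [X in _ + X]big1 ?addr0; last first.
  move=> j hji.
  rewrite (@prod_sum R Y N (fun k b => w k b * ((if k == i then Z i b else 1) * (if k == j then Z j b else 1)))).
  apply/eqP/prodf_eq0; exists i => //.
  rewrite eqxx; have -> : (i == j) = false by rewrite eq_sym (negbTE hji).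
  by under eq_bigr do rewrite mulr1; rewrite hz eqxx.
rewrite (@prod_sum R Y N (fun k b => w k b * ((if k == i then Z i b else 1) * (if k == i then Z i b else 1)))).
rewrite (bigD1 i) //= [X in _ * X]big1 ?mulr1.
  by apply: eq_bigr => b _; rewrite eqxx expr2.
move=> k hk; rewrite (negbTE hk).
by under eq_bigr do rewrite !mulr1; rewrite hw.
Qed.

Lemma mutinf_bound (R : realType) (X Y : finType) (W : X -> Y -> R) (P : X -> R) :
  is_channel W -> is_dist P -> mutinf P W <= #|X|%:R.
Proof.
move=> HW [HP _].
have -> : (#|X|%:R : R) = \sum_(x : X) \sum_(y : Y) W x y.
  by rewrite -sumr_const; apply: eq_bigr => x _; case: (HW x).
apply: ler_sum => x _; apply: ler_sum => y _.
have hW0 : 0 <= W x y by case: (HW x).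
have [h0|hne] := eqVneq (P x * W x y) 0; first by rewrite h0 mul0r.
have hpos : 0 < P x * W x y by rewrite lt_def hne mulr_ge0.
have hq : P x * W x y <= qout P W y.
  rewrite /qout (bigD1 x) //= lerDl; apply: sumr_ge0 => z _.
  by rewrite mulr_ge0 //; case: (HW z).
have hqpos : 0 < qout P W y by apply: lt_le_trans hq.
have hWpos : 0 < W x y.
  by rewrite lt_def hW0 andbT; apply: contraNneq hne => ->; rewrite mulr0.
have hl : ln (W x y / qout P W y) <= W x y / qout P W y - 1.
  have := @le_ln1Dx R (W x y / qout P W y - 1).
  rewrite addrCA subrr addr0; apply.
  by rewrite ltrBrDl subrr divr_gt0.
have hr : P x * W x y / qout P W y <= 1 by rewrite ler_pdivrMr // mul1r.
apply: (le_trans (ler_wpM2l (ltW hpos) hl)).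
have -> : P x * W x y * (W x y / qout P W y - 1)
   = W x y * (P x * W x y / qout P W y) - P x * W x y by rewrite mulrBr mulr1; congr (_ - _); ring.
have := ler_wpM2l hW0 hr; rewrite mulr1 => h.
lra.
Qed.

Lemma cap_ge (R : realType) (X Y : finType) (W : X -> Y -> R) (P : X -> R) :
  is_channel W -> is_dist P -> mutinf P W <= capacity W.
Proof.
move=> HW HP.
have hs : has_sup [set r | exists P, is_dist P /\ r = mutinf P W]%classic.
  split; first by exists (mutinf P W), P.
  by exists #|X|%:R => r [P' [HP' ->]]; apply: mutinf_bound.
by have := sup_upper_bound hs; apply; exists P.
Qed.

Lemma Phi0 (R : realType) : Phi (0%R:R) = 2^-1.
Proof.
have ev : forall x : R, normal_pdf 0 1 x = normal_pdf 0 1 (- x).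
  move=> x; rewrite /normal_pdf oner_eq0 /normal_fun !subr0 sqrrN //.
have := @ge0_symfun_integralT R (normal_pdf 0 1) (@normal_pdf_ge0 R 0 1)
   (@continuous_normal_pdf R 0 1 (oner_neq0 R)) ev.
rewrite integral_normal_pdf.
have -> : [set x : R | 0 <= x]%classic = `[(0%R:R), +oo[%classic by rewrite set_itvcy.
rewrite /Phi /Rintegral.
have -> : (\int[lebesgue_measure]_(x in `]-oo, (0%R:R)]) (normal_pdf 0%R 1%R x)%:E)%E
   = (\int[lebesgue_measure]_(x in `[(0%R:R), +oo[) (normal_pdf 0%R 1%R x)%:E)%E.
  rewrite ge0_integration_by_substitution0 //.
  - by apply: eq_integral => x _; rewrite -ev.
  - by apply/measurable_EFinP; exact: measurable_normal_pdf.
  - by move=> r; rewrite lee_fin normal_pdf_ge0.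
case: (\int[lebesgue_measure]_(x in `[(0%R:R), +oo[) (normal_pdf 0%R 1%R x)%:E)%E => [r| |] //=.
  move=> /eqP; rewrite -EFinM eqe => /eqP h.
  lra.
  by rewrite gt0_muley.
  by rewrite gt0_muleNy.
Qed.

Theorem lemma13 (R : realType) (X Y : finType) (W : X -> Y -> R) (eps a : R)
    (N : nat) :
  is_channel W ->
  2^-1 < eps -> eps < 1 ->
  0 < Veps W ->
  0 < a -> 2 / (1 - eps) < a ->
  (0 < N)%N ->
  let RN := capacity W + Num.sqrt (Veps W / N%:R) * Phiinv eps
            - N%:R^-1 * ln (1 - eps - 2 / a) in
  forall (f : 'I_(nmsg N RN) -> {ffun 'I_N -> X})
         (phi : {ffun 'I_N -> Y} -> 'I_(nmsg N RN)) (Q : X -> R),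
  (forall m, composition (f m) = Q) ->
  cvar Q W < a^-1 * Veps W * (Phiinv eps) ^+ 2 ->
  eps < avg_err W f phi.
Proof.
move=> HW heps1 heps2 hV ha0 ha hN RN f phi Q hcomp hcv.
set M := nmsg N RN.
have hNr : (0 < N%:R :> R) by rewrite ltr0n.
have hNr0 : (N%:R : R) != 0 by rewrite gt_eqF.
have hM : expR (N%:R * RN) <= M%:R.
  rewrite /M /nmsg natr_absz ger0_norm ?ceil_ge //.
  by rewrite ceil_ge0 (lt_le_trans _ (expR_ge0 _)) // ltrN10.
have hMpos : (0 < M)%N.
  by rewrite -(ltr0n R); apply: lt_le_trans (expR_gt0 _) hM.
have hMr : (0 < M%:R :> R) by rewrite ltr0n.
pose m0 : 'I_M := Ordinal hMpos.
have hQ : is_dist Q by rewrite -(hcomp m0); apply: comp_dist.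
have hQge : forall a, 0 <= Q a by case: hQ.
have hWge : forall x y, 0 <= W x y by move=> x y; case: (HW x).
have hWsum : forall x, \sum_y W x y = 1 by move=> x; case: (HW x).
set q := qout Q W.
have hq0 : forall b, 0 <= q b.
  by move=> b; apply: sumr_ge0 => x _; rewrite mulr_ge0.
have hqsum : \sum_b q b = 1.
  rewrite /q /qout exchange_big /=; case: hQ => _ <-; apply: eq_bigr => x _.
  by rewrite -mulr_sumr hWsum mulr1.
pose Dv := fun a => \sum_b W a b * ln (W a b / q b).
pose Z := fun a b => ln (W a b / q b) - Dv a.
have hZ : forall a, \sum_b W a b * Z a b = 0.
  move=> x; rewrite /Z; under eq_bigr do rewrite mulrBr.
  by rewrite sumrB -mulr_suml hWsum mul1r subrr.
have hI : mutinf Q W = \sum_a Q a * Dv a.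
  rewrite /mutinf; apply: eq_bigr => x _; rewrite /Dv mulr_sumr.
  by apply: eq_bigr => b _; rewrite mulrA.
have hcvar : cvar Q W = \sum_a Q a * \sum_b W a b * Z a b ^+ 2.
  rewrite /cvar; apply: eq_bigr => x _; rewrite mulr_sumr.
  by apply: eq_bigr => b _; rewrite mulrA.
have hIC : mutinf Q W <= capacity W by apply: cap_ge.
have hcv0 : 0 <= cvar Q W.
  rewrite hcvar; apply: sumr_ge0 => x _; rewrite mulr_ge0 //.
  by apply: sumr_ge0 => b _; rewrite mulr_ge0 ?sqr_ge0.
have hPhi : 0 < Phiinv eps.
  have hne : Phiinv eps != 0.
    apply/eqP => h; move: hcv; rewrite h expr0n /= mulr0 => h'.
    by move: (lt_le_trans h' hcv0); rewrite ltxx.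
  rewrite lt_def hne /=.
  have hS0 : [set x : R | Phi x <= eps]%classic 0.
    by rewrite /= Phi0 ltW.
  case: (pselect (has_sup [set x : R | Phi x <= eps]%classic)) => hs.
    by have := sup_upper_bound hs; apply.
  by rewrite /Phiinv sup_out.
pose t := N%:R * (Num.sqrt (Veps W / N%:R) * Phiinv eps).
have ht : 0 < t.
  by rewrite /t mulr_gt0 // mulr_gt0 // sqrtr_gt0 divr_gt0.
have ht2 : t ^+ 2 = N%:R * (Veps W * Phiinv eps ^+ 2).
  rewrite /t !exprMn sqr_sqrtr ?divr_ge0 ?ltW //.
  by field.
pose g := expR (N%:R * mutinf Q W + t).
pose qN := fun y : {ffun 'I_N -> Y} => \prod_i q (y i).
pose S := fun (x : {ffun 'I_N -> X}) (y : {ffun 'I_N -> Y}) => \sum_i Z (x i) (y i).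
have hqN0 : forall y, 0 <= qN y by move=> y; apply: prodr_ge0.
have claimA : forall m y, prodW W (f m) y <=
    g * qN y + prodW W (f m) y * (S (f m) y ^+ 2 / t ^+ 2).
  move=> m y; set x := f m.
  have hPW0 : 0 <= prodW W x y by apply: prodr_ge0.
  have hg0 : 0 <= g * qN y by rewrite mulr_ge0 ?expR_ge0.
  have hT0 : 0 <= prodW W x y * (S x y ^+ 2 / t ^+ 2).
    by rewrite mulr_ge0 // divr_ge0 ?sqr_ge0.
  have [h0|hne] := eqVneq (prodW W x y) 0.
    by rewrite h0 mul0r addr0.
  have hWpos : forall i, 0 < W (x i) (y i).
    move=> i; rewrite lt_def hWge andbT.
    by move: hne; rewrite /prodW => /prodf_neq0; apply.
  have hQpos : forall i, 0 < Q (x i).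
    move=> i; rewrite -(hcomp m) /composition divr_gt0 // ltr0n.
    by apply/card_gt0P; exists i; rewrite in_setE /=.
  have hqpos : forall i, 0 < q (y i).
    move=> i; rewrite /q /qout (bigD1 (x i)) //=.
    apply: (lt_le_trans (mulr_gt0 (hQpos i) (hWpos i))); rewrite lerDl.
    by apply: sumr_ge0 => z _; rewrite mulr_ge0.
  have hS : \sum_i ln (W (x i) (y i) / q (y i)) = S x y + N%:R * mutinf Q W.
    rewrite /S /Z sumrB (@comp_sum R X N x Dv hN) (hcomp m) -hI subrK //.
  have hprod : prodW W x y = expR (S x y + N%:R * mutinf Q W) * qN y.
    rewrite -hS expR_sum /qN -big_split /=; apply: eq_bigr => i _.
    by rewrite lnK ?posrE ?divr_gt0 // divfK // gt_eqF.
  have [hle|hgt] := lerP (S x y) t.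
    apply: (le_trans _ (ler_wpDr hT0 (lexx _))).
    rewrite hprod ler_wpM2r // ler_expR; lra.
  have h1 : 1 <= S x y ^+ 2 / t ^+ 2.
    rewrite ler_pdivlMr ?exprn_gt0 // mul1r !expr2; nra.
  apply: (le_trans _ (ler_wpDl hg0 (lexx _))).
  by rewrite -{1}[prodW W x y]mulr1 ler_wpM2l.
have hsum1 : forall x : {ffun 'I_N -> X}, \sum_y prodW W x y = 1.
  move=> x; rewrite /prodW (@prod_sum R Y N (fun i b => W (x i) b)).
  by rewrite big1 // => i _; rewrite hWsum.
have hvar : forall m, \sum_y prodW W (f m) y * S (f m) y ^+ 2 = N%:R * cvar Q W.
  move=> m; rewrite /prodW /S.
  rewrite (@var_lemma R Y N (fun i b => W (f m i) b) (fun i b => Z (f m i) b)) //.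
  rewrite (@comp_sum R X N (f m) (fun a => \sum_b W a b * Z a b ^+ 2) hN).
  by rewrite (hcomp m) hcvar.
have hA : forall m, \sum_(y | phi y == m) prodW W (f m) y <=
    g * \sum_(y | phi y == m) qN y + N%:R * cvar Q W / t ^+ 2.
  move=> m.
  apply: (le_trans (ler_sum _ (fun y _ => claimA m y))).
  rewrite big_split /= -mulr_sumr lerD2l -(hvar m) mulr_suml.
  under [X in _ <= X]eq_bigr do rewrite -mulrA.
  rewrite [X in _ <= X](bigID (fun y => phi y == m)) /= lerDl.
  apply: sumr_ge0 => y _; rewrite mulr_ge0 ?divr_ge0 ?sqr_ge0 //.
  exact: prodr_ge0.
have hqN : \sum_m \sum_(y | phi y == m) qN y = 1.
  have <- : \sum_y qN y = \sum_m \sum_(y | phi y == m) qN y.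
    by rewrite (partition_big phi xpredT).
  by rewrite /qN (@prod_sum R Y N (fun i b => q b)) big1.
have herr : avg_err W f phi =
    1 - M%:R^-1 * \sum_m \sum_(y | phi y == m) prodW W (f m) y.
  rewrite /avg_err.
  have e : forall m, \sum_(y | phi y != m) prodW W (f m) y
             = 1 - \sum_(y | phi y == m) prodW W (f m) y.
    move=> m; rewrite -(hsum1 (f m)) [X in _ = X - _](bigID (fun y => phi y == m)) /=.
    by rewrite addrC addrK.
  under eq_bigr do rewrite e.
  rewrite sumrB sumr_const card_ord mulrBr -/M mulVf ?gt_eqF //.
pose c := 1 - eps - 2 / a.
have hc0 : 0 < c.
  rewrite /c; have : 2 < a * (1 - eps).
    by rewrite -ltr_pdivrMr ?subr_gt0.
  move=> h; have : 2 / a < 1 - eps by rewrite ltr_pdivrMr // mulrC.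
  lra.
have hsumA : \sum_m \sum_(y | phi y == m) prodW W (f m) y <=
    g + M%:R * (N%:R * cvar Q W / t ^+ 2).
  apply: (le_trans (ler_sum _ (fun m _ => hA m))).
  rewrite big_split /= -mulr_sumr hqN mulr1 sumr_const card_ord.
  by rewrite [X in _ <= _ + X]mulr_natl.
have hg : g / M%:R <= c.
  rewrite ler_pdivrMr //.
  apply: (le_trans _ (ler_wpM2l (ltW hc0) hM)).
  rewrite -[c in X in _ <= X]lnK ?posrE // -expRD ler_expR /RN.
  have -> : N%:R * (capacity W + Num.sqrt (Veps W / N%:R) * Phiinv eps
            - N%:R^-1 * ln (1 - eps - 2 / a)) = N%:R * capacity W + t - ln c.
    by rewrite /t /c; field.
  have : N%:R * mutinf Q W <= N%:R * capacity W by rewrite ler_wpM2l // ltW.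
  lra.
have hcc : N%:R * cvar Q W / t ^+ 2 < a^-1.
  rewrite ltr_pdivrMr ?exprn_gt0 // ht2.
  have hNV : 0 < N%:R * (Veps W * Phiinv eps ^+ 2) by rewrite mulr_gt0 // mulr_gt0 // exprn_gt0.
  have : N%:R * cvar Q W < N%:R * (a^-1 * Veps W * Phiinv eps ^+ 2) by rewrite ltr_pM2l.
  by rewrite !mulrA [_ * a^-1]mulrC.
have hfin : M%:R^-1 * \sum_m \sum_(y | phi y == m) prodW W (f m) y <=
    g / M%:R + N%:R * cvar Q W / t ^+ 2.
  apply: (le_trans (ler_wpM2l _ hsumA)); first by rewrite invr_ge0 ltW.
  rewrite mulrDr.
  by rewrite mulKf ?gt_eqF // mulrC.
have hai : 0 < a^-1 by rewrite invr_gt0.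
rewrite herr.
move: hg hcc hfin; rewrite /c; lra.
Qed.
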